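(* Let $n\ge 1$, let $x_1<x_2<\dots<x_n$ be real numbers and $m_1,\dots,m_n>0$, and define $s_k=\sum_{j=1}^n m_j x_j^k$ for $k=0,1,2,\dots$. Let $D_{n-1}=\det(s_{i+j})_{0\le i,j\le n-1}$. Let $p\ge 1$ be an integer and let $(a_{i,j})_{0\le i,j\le n+p}$ be a real $(n+p+1)\times(n+p+1)$ matrix such that $a_{i,j}=s_{i+j}$ whenever $i+j\le 2n+p-1$, while the entries with $i+j\ge 2n+p$ are arbitrary real numbers. Write $y_j=a_{n+j,\,n+p-j}$ for $j=0,1,\dots,p$ (these are exactly the entries with $i+j=2n+p$). Then $$\det(a_{i,j})_{0\le i,j\le n+p}=(-1)^{p(p+1)/2}\,D_{n-1}\prod_{j=0}^{p}\bigl(y_j-s_{2n+p}\bigr).$$ In particular, this determinant does not depend on the entries $a_{i,j}$ with $i+j\ge 2n+p+1$.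
   Context: Here $s_{2n+p}=\sum_{j=1}^n m_j x_j^{2n+p}$ is the moment of the discrete measure, not an entry of the matrix. *)

(* Defs.v *)
From mathcomp Require Import all_boot all_order all_algebra.
Set Implicit Arguments. Unset Strict Implicit. Unset Printing Implicit Defensive.
Import Order.TTheory GRing.Theory Num.Theory.
Local Open Scope ring_scope.

Definition moment (R : pzRingType) (n : nat) (m x : 'I_n -> R) (k : nat) : R :=
  \sum_(j < n) m j * x j ^+ k.

Definition hankel_det (R : comPzRingType) (n : nat) (m x : 'I_n -> R) : R :=
  \det (\matrix_(i < n, j < n) moment m x (i + j)%N).

(* Main.v *)
Require Import Defs.
From mathcomp Require Import all_boot all_order all_algebra.
From mathcomp Require Import ring lra zify.
Import Order.TTheory GRing.Theory Num.Theory.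
Local Open Scope ring_scope.

Lemma det_castmx (R : comNzRingType) N M (e : N = M) (A : 'M[R]_N) :
  \det (castmx (e, e) A) = \det A.
Proof. by case: M / e; rewrite castmx_id. Qed.

Lemma size_Pn (R : fieldType) n (x : 'I_n -> R) :
  size (\prod_(j < n) ('X - (x j)%:P)) = n.+1.
Proof. by rewrite size_prod_XsubC /index_enum -enumT size_enum_ord. Qed.

Lemma annih (R : fieldType) n (m x : 'I_n -> R) l :
  \sum_(t < n.+1) (\prod_(j < n) ('X - (x j)%:P))`_t * moment m x (t + l) = 0.
Proof.
set P := \prod_(j < n) ('X - (x j)%:P).
rewrite /moment.
under eq_bigr do rewrite big_distrr /=.
rewrite exchange_big /=.
apply: big1 => j _.
have -> : \sum_(t < n.+1) P`_t * (m j * x j ^+ (t + l)) = m j * x j ^+ l * P.[x j].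
  rewrite horner_coef size_Pn big_distrr /=; apply: eq_bigr => t _.
  rewrite exprD; ring.
rewrite horner_prod (bigD1 j) //= hornerXsubC subrr mul0r mulr0 //.
Qed.
Lemma det_anti (R : comNzRingType) q (M : 'M[R]_q.+1) :
  (forall i j : 'I_q.+1, (i + j < q)%N -> M i j = 0) ->
  \det M = (-1) ^+ (q * q.+1 %/ 2) * \prod_(i < q.+1) M i (inord (q - i)).
Proof.
elim: q M => [|q IH] M HM.
  rewrite det_mx11 big_ord1 /= expr0 mul1r; congr (M _ _); apply: val_inj => /=.
  by rewrite inordK.
rewrite (expand_det_row _ ord0) (bigD1 ord_max) //= big1 ?addr0; last first.
  move=> j Hj; rewrite HM ?mul0r //= add0n.
  have := ltn_ord j; move: Hj; rewrite -val_eqE /= => Hj; lia.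
rewrite /cofactor IH; last first.
  move=> i j Hij; rewrite !mxE; apply: HM => /=.
  rewrite /bump /=. have := ltn_ord j; lia.
rewrite [in RHS]big_ord_recl /=.
have -> : (q.+1 * q.+2 %/ 2 = q.+1 + q * q.+1 %/ 2)%N.
  have -> : (q.+1 * q.+2 = q.+1 * 2 + q * q.+1)%N by nia.
  by rewrite divnMDl.
rewrite exprD.
have -> : (inord (q.+1 - 0) : 'I_q.+2) = ord_max by apply: val_inj; rewrite /= inordK.
rewrite [in RHS](eq_bigr (fun i : 'I_q.+1 => row' ord0 (col' ord_max M) i (inord (q - i)))); last first.
  move=> i _; rewrite !mxE; congr (M _ _); apply: val_inj => /=.
  rewrite /bump /= !inordK; have := ltn_ord i; lia.
rewrite exprD expr0.
ring.
Qed.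

Theorem lemma2p3 (R : realFieldType) (n p : nat) (x m : 'I_n -> R)
  (A : 'M[R]_((n + p).+1))
  (hn : (1 <= n)%N) (hp : (1 <= p)%N)
  (hx : forall i j : 'I_n, (i < j)%N -> x i < x j)
  (hm : forall j : 'I_n, 0 < m j)
  (hA : forall i j : 'I_(n + p).+1,
          (i + j <= (2 * n + p).-1)%N -> A i j = moment m x (i + j)%N) :
  \det A =
    (-1) ^+ (p * p.+1 %/ 2) * hankel_det m x *
    \prod_(j < p.+1)
      (A (inord (n + j)) (inord (n + p - j)) - moment m x (2 * n + p)%N).
Proof.
set P := \prod_(j < n) ('X - (x j)%:P).
pose c t := P`_t.
have sizeP : size P = n.+1 by apply: size_Pn.
have cn : c n = 1.
  have := lead_coef_prod_XsubC (index_enum 'I_n) xpredT x.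
  by rewrite /lead_coef -/P sizeP.
have cbig : forall t, (n < t)%N -> c t = 0.
  by move=> t ht; rewrite /c nth_default // sizeP.
have ann : forall l, \sum_(t < n.+1) c t * moment m x (t + l) = 0.
  by move=> l; apply: annih.
pose U : 'M[R]_((n+p).+1) := \matrix_(k, j)
  if (n <= j)%N then ((j - n <= k)%N)%:R * c (k - (j - n))%N else (k == j)%:R.
have detU : \det U = 1.
  rewrite -det_tr det_trig; last first.
    apply/is_trig_mxP => i j hij; rewrite !mxE.
    case: ifP => hni.
      rewrite cbig ?mulr0 //; lia.
    by rewrite (_ : (j == i) = false) //; apply/negbTE; rewrite -val_eqE /=; lia.
  apply: big1 => i _; rewrite !mxE.
  case: ifP => hni; last by rewrite eqxx.
  by rewrite leq_subr mul1r (_ : (i - (i - n) = n)%N) //; lia.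
pose B := A *m U.
have hB1 : forall i j : 'I_(n+p).+1, (j < n)%N -> B i j = A i j.
  move=> i j hj; rewrite mxE (bigD1 j) //= big1 ?addr0.
    by rewrite mxE leqNgt hj /= eqxx mulr1.
  move=> k hk; rewrite mxE leqNgt hj /= (negbTE hk) mulr0 //.
have hB2 : forall i j : 'I_(n+p).+1, (n <= j)%N ->
    B i j = \sum_(t < n.+1) c t * A i (inord (j - n + t)).
  move=> i j hj; rewrite mxE.
  under eq_bigr do rewrite mxE hj.
  set b := (j - n)%N.
  have hb : (b <= p)%N by have := ltn_ord j; rewrite /b; lia.
  rewrite (eq_bigr (fun k : 'I__ => (fun k : nat => A i (inord k) * ((b <= k)%:R * c (k - b)%N)) k)); last first.
    by move=> k _; rewrite inord_val.
  rewrite -(big_mkord xpredT (fun k => A i (inord k) * ((b <= k)%:R * c (k - b)%N))) (@big_cat_nat _ _ _ b) //=; last by lia.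
  rewrite big_nat_cond big1 ?add0r; last first.
    by move=> k /andP[/andP[_ hk] _]; rewrite leqNgt hk mul0r mulr0.
  rewrite -{1}[b]add0n big_addn.
  rewrite (@big_cat_nat _ _ _ n.+1) //=; last by lia.
  rewrite [X in _ + X]big_nat_cond [X in _ + X]big1 ?addr0; last first.
    by move=> k /andP[/andP[hk _] _]; rewrite cbig ?mulr0 ?mul0r //; lia.
  rewrite big_mkord; apply: eq_bigr => t _.
  rewrite leq_addl mul1r addnK mulrC; congr (_ * A i _).
  by congr inord; lia.
have hB3 : forall i j : 'I_(n+p).+1, (n <= j)%N ->
    (i + j <= (2 * n + p).-1)%N -> B i j = 0.
  move=> i j hj hij; rewrite hB2 //.
  rewrite -[RHS](ann (i + j - n)%N); apply: eq_bigr => t _.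
  have ht := ltn_ord t.
  have hjt : (j - n + t < (n + p).+1)%N by have := ltn_ord j; lia.
  rewrite hA /= inordK //; last by lia.
  by congr (_ * moment m x _); lia.
have hB4 : forall i j : 'I_(n+p).+1, (n <= j)%N ->
    (i + j = 2 * n + p)%N -> B i j = A i j - moment m x (2 * n + p)%N.
  move=> i j hj hij; rewrite hB2 // big_ord_recr /=.
  have := ann (i + j - n)%N; rewrite big_ord_recr /= => H.
  have -> : \sum_(t < n) c (widen_ord (leqnSn n) t) * A i (inord (j - n + widen_ord (leqnSn n) t))
     = \sum_(t < n) c (widen_ord (leqnSn n) t) * moment m x (widen_ord (leqnSn n) t + (i + j - n))%N.
    apply: eq_bigr => t _.
    have ht := ltn_ord t.
    have hjt : (j - n + t < (n + p).+1)%N by have := ltn_ord j; lia.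
    rewrite hA /= inordK //; last by lia.
    by congr (_ * moment m x _); lia.
  move: H; rewrite cn !mul1r => /eqP; rewrite addr_eq0 => /eqP ->.
  have -> : (n + (i + j - n) = 2 * n + p)%N by lia.
  have -> : (inord (j - n + n) : 'I_(n+p).+1) = j by apply: val_inj; have hjN := ltn_ord j; rewrite /= inordK; lia.
  by rewrite addrC.
have e : (n + p).+1 = (n + p.+1)%N by rewrite addnS.
pose C := castmx (e, e) B.
have detC : \det C = \det A by rewrite det_castmx det_mulmx detU mulr1.
rewrite -detC -[C]submxK.
have -> : ursubmx C = 0.
  apply/matrixP => i j; rewrite !mxE castmxE /=; apply: hB3 => /=.
    by rewrite leq_addr.
  have := ltn_ord i; have := ltn_ord j; lia.
rewrite det_lblock.
have -> : \det (ulsubmx C) = hankel_det m x.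
  rewrite /hankel_det; congr (\det _); apply/matrixP => i j; rewrite !mxE castmxE /=.
  rewrite hB1 /=; last by [].
  rewrite hA //=; have := ltn_ord i; have := ltn_ord j; lia.
rewrite (@det_anti _ p); last first.
  move=> a b hab; rewrite !mxE castmxE /=; apply: hB3 => /=.
    by rewrite leq_addr.
  lia.
rewrite mulrCA mulrA; congr (_ * _).
apply: eq_bigr => a _; rewrite !mxE castmxE /=.
have ha := ltn_ord a.
rewrite hB4 /=; last by rewrite inordK; lia.
  by congr (A _ _ - _); apply: val_inj; rewrite /= !inordK //; lia.
by rewrite leq_addr.
Qed.
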